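(* Let $(\alpha,\omega,\beta)$ be a feasible endpoint constraint and let $\mathcal{O}(\alpha,\omega,\beta)$ be the set of valid occupancy functions $\gamma$ on $[0,\beta]$ with $\gamma(0)=\alpha$ and $\gamma(\beta)=\omega$. Then (a) $\mathcal{O}(\alpha,\omega,\beta)$ is a convex set, and (b) $J$ restricted to $\mathcal{O}(\alpha,\omega,\beta)$ is a convex function.
   Context: Fix $I\ge0$, $\beta>0$, $S_I=\{\gamma\in\mathbb{R}^{I+2}:\gamma_j\ge0,\sum_{j=0}^{I+1}\gamma_j=1\}$ (components $0,\dots,I,I+$), $\alpha,\omega\in S_I$. A valid occupancy function on $[0,\beta]$ is an absolutely continuous $\gamma:[0,\beta]\to S_I$ whose rate $\theta$, defined by $\dot\gamma_0=-\theta_0$, $\dot\gamma_j=\theta_{j-1}-\theta_j$ ($1\le j\le I$), $\dot\gamma_{I+}=\theta_I$, $\sum_j\theta_j=1$, lies in $S_I$ a.e. Feasible means at least one such $\gamma$ joins $\alpha$ to $\omega$. $J(\gamma)=\int_0^\beta D(\theta(x)\|\gamma(x))dx$ where $D(\theta\|\gamma)=\sum_i\theta_i\log(\theta_i/\gamma_i)$ is relative entropy ($0\log0=0$, $\theta\log(\theta/0)=\infty$ for $\theta>0$); $J$ takes values in $[0,\infty]$. *)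

(* Defs.v *)
From HB Require Import structures.
From mathcomp Require Import all_boot all_order all_algebra.
From mathcomp Require Import all_classical all_reals all_analysis.
Set Implicit Arguments. Unset Strict Implicit. Unset Printing Implicit Defensive.
Import Order.TTheory GRing.Theory Num.Theory.
Import numFieldNormedType.Exports.
Local Open Scope classical_set_scope.
Local Open Scope ring_scope.

Section Defs.
Variable R : realType.
Variable I : nat.

(* Components are indexed by 'I_(I+2): index j <= I is component j, and
   index I+1 (= ord_max) is the component "I+". *)
Definition simplex (g : 'I_I.+2 -> R) : Prop :=
  (forall j, 0 <= g j) /\ \sum_(j < I.+2) g j = 1.

Definition abs_cont_on (a b : R) (f : R -> R) : Prop :=
  forall eps : R, 0 < eps -> exists2 delta : R, 0 < delta &
    forall (n : nat) (u v : 'I_n -> R),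
      (forall k, a <= u k /\ u k <= v k /\ v k <= b) ->
      (forall k l, k != l -> v k <= u l \/ v l <= u k) ->
      \sum_(k < n) (v k - u k) < delta ->
      \sum_(k < n) `|f (v k) - f (u k)| < eps.

(* theta_n = - (gamma_0' + ... + gamma_n'), the unique solution of
   theta_0 = - gamma_0', theta_j = theta_(j-1) - gamma_j'. *)
Definition theta_nat (gam : R -> 'I_I.+2 -> R) (x : R) (n : nat) : R :=
  - \sum_(k < I.+2 | (k <= n)%N) derive1 (fun y => gam y k) x.

(* The rate theta(x) in R^(I+2): components 0..I from the ODE relations,
   component I+ fixed by sum_j theta_j = 1. *)
Definition rate (gam : R -> 'I_I.+2 -> R) (x : R) : 'I_I.+2 -> R :=
  fun j => if (j <= I)%N then theta_nat gam x j
           else 1 - \sum_(k < I.+1) theta_nat gam x k.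

Definition valid_occupancy (beta : R) (gam : R -> 'I_I.+2 -> R) : Prop :=
  (forall j, abs_cont_on 0 beta (fun y => gam y j)) /\
  (forall x, x \in `[0, beta] -> simplex (gam x)) /\
  {ae (@lebesgue_measure R), forall x, x \in `[0, beta] ->
     (forall j, derivable (fun y => gam y j) x 1) /\
     derive1 (fun y => gam y ord_max) x = rate gam x (inord I) /\
     simplex (rate gam x)}.

Definition occ_set (alpha omega : 'I_I.+2 -> R) (beta : R)
    (gam : R -> 'I_I.+2 -> R) : Prop :=
  valid_occupancy beta gam /\ gam 0 = alpha /\ gam beta = omega.

Definition feasible (alpha omega : 'I_I.+2 -> R) (beta : R) : Prop :=
  exists gam, occ_set alpha omega beta gam.

Definition xlogxy (t g : R) : \bar R :=
  if t == 0 then 0%E else if g == 0 then +oo%E else (t * ln (t / g))%:E.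

Definition relent (th g : 'I_I.+2 -> R) : \bar R :=
  (\sum_(j < I.+2) xlogxy (th j) (g j))%E.

Definition Jcost (beta : R) (gam : R -> 'I_I.+2 -> R) : \bar R :=
  (\int[@lebesgue_measure R]_(x in `[0%R, beta]) relent (rate gam x) (gam x))%E.

Definition comb (t : R) (g1 g2 : R -> 'I_I.+2 -> R) : R -> 'I_I.+2 -> R :=
  fun x j => t * g1 x j + (1 - t) * g2 x j.

End Defs.

(* Main.v *)
Require Import Defs.
From HB Require Import structures.
From mathcomp Require Import all_boot all_order all_algebra.
From mathcomp Require Import all_classical all_reals all_analysis.
From mathcomp Require Import ring lra.
From mathcomp Require Import measurable_realfun.
Set Implicit Arguments. Unset Strict Implicit. Unset Printing Implicit Defensive.
Import Order.TTheory GRing.Theory Num.Theory.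
Import numFieldNormedType.Exports.
Local Open Scope classical_set_scope.
Local Open Scope ring_scope.
Section S.
Variable R : realType.

Lemma derive_comb (f g : R -> R) (x t : R) :
  derivable f x 1 -> derivable g x 1 ->
  derivable (fun y => t * f y + (1 - t) * g y) x 1 /\
  derive1 (fun y => t * f y + (1 - t) * g y) x = t * derive1 f x + (1 - t) * derive1 g x.
Proof.
move=> df dg.
have -> : (fun y => t * f y + (1 - t) * g y) = (t \*: f) + ((1 - t) \*: g) by [].
split; first by apply: derivableD; apply: derivableZ.
by rewrite !derive1E deriveD ?deriveZ //; apply: derivableZ.
Qed.
End S.
Section S2.
Variable R : realType.
Variable I : nat.


Lemma theta_comb (g1 g2 : R -> 'I_I.+2 -> R) x t n :
  (forall j, derivable (fun y => g1 y j) x 1) ->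
  (forall j, derivable (fun y => g2 y j) x 1) ->
  theta_nat (comb t g1 g2) x n = t * theta_nat g1 x n + (1 - t) * theta_nat g2 x n.
Proof.
move=> d1 d2; rewrite /theta_nat /comb.
under eq_bigr => k _ do rewrite (derive_comb t (d1 k) (d2 k)).2.
by rewrite big_split /= -!mulr_sumr; ring.
Qed.

Lemma rate_comb (g1 g2 : R -> 'I_I.+2 -> R) x t j :
  (forall j, derivable (fun y => g1 y j) x 1) ->
  (forall j, derivable (fun y => g2 y j) x 1) ->
  rate (comb t g1 g2) x j = t * rate g1 x j + (1 - t) * rate g2 x j.
Proof.
move=> d1 d2; rewrite /rate; case: ifP => _; first exact: theta_comb.
under eq_bigr => k _ do rewrite (theta_comb t k d1 d2).
by rewrite big_split /= -!mulr_sumr; ring.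
Qed.
End S2.
Section S3.
Variable R : realType.
Variable I : nat.

Lemma simplex_comb (a b : 'I_I.+2 -> R) t : 0 <= t <= 1 ->
  simplex a -> simplex b -> simplex (fun j => t * a j + (1 - t) * b j).
Proof.
move=> /andP[t0 t1] [a0 a1] [b0 b1]; split.
  by move=> j; rewrite addr_ge0 // mulr_ge0 // subr_ge0.
by rewrite big_split /= -!mulr_sumr a1 b1; ring.
Qed.

Lemma abs_cont_comb (a b : R) (f g : R -> R) t : 0 <= t <= 1 ->
  abs_cont_on a b f -> abs_cont_on a b g ->
  abs_cont_on a b (fun y => t * f y + (1 - t) * g y).
Proof.
move=> /andP[t0 t1] hf hg eps e0.
have e20 : 0 < eps / 2 by rewrite divr_gt0.
have [d1 d10 H1] := hf _ e20; have [d2 d20 H2] := hg _ e20.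
exists (Num.min d1 d2); first by rewrite lt_min d10 d20.
move=> n u v huv hdis hsum.
have m1 : Num.min d1 d2 <= d1 by rewrite ge_min lexx.
have m2 : Num.min d1 d2 <= d2 by rewrite ge_min lexx orbT.
have s1 := H1 n u v huv hdis (lt_le_trans hsum m1).
have s2 := H2 n u v huv hdis (lt_le_trans hsum m2).
have he : eps / 2 + eps / 2 = eps by field.
rewrite -he; apply: (le_lt_trans _ (ltrD s1 s2)); rewrite -big_split /=.
apply: ler_sum => k _.
have -> : t * f (v k) + (1 - t) * g (v k) - (t * f (u k) + (1 - t) * g (u k))
  = t * (f (v k) - f (u k)) + (1 - t) * (g (v k) - g (u k)) by ring.
apply: (le_trans (ler_normD _ _)); rewrite !normrM.
have -> : `|t| = t by rewrite ger0_norm.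
have -> : `|1 - t| = 1 - t by rewrite ger0_norm // subr_ge0.
apply: lerD.
  by rewrite ler_piMl.
by rewrite ler_piMl // ?subr_ge0 // lerBlDr lerDl.
Qed.
End S3.
Section S4.
Variable R : realType.
Variable I : nat.

Lemma occ_comb (alpha omega : 'I_I.+2 -> R) beta (g1 g2 : R -> 'I_I.+2 -> R) t :
  occ_set alpha omega beta g1 -> occ_set alpha omega beta g2 ->
  0 <= t <= 1 -> occ_set alpha omega beta (comb t g1 g2).
Proof.
move=> [[ac1 [s1 ae1]] [e01 eb1]] [[ac2 [s2 ae2]] [e02 eb2]] ht.
split; [split; [|split] | split].
- by move=> j; apply: abs_cont_comb.
- by move=> x hx; apply: simplex_comb (s1 x hx) (s2 x hx).
- move: ae1 ae2; apply: (filterS2 (ae_filter_ringOfSetsType (@lebesgue_measure R))) => x H1 H2 hx.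
  have [d1 [m1 r1]] := H1 hx; have [d2 [m2 r2]] := H2 hx.
  have dc j := derive_comb t (d1 j) (d2 j).
  split; [by move=> j; exact: (dc j).1 | split].
  + by rewrite rate_comb // -m1 -m2 -(dc ord_max).2.
  + have -> : rate (comb t g1 g2) x = fun j => t * rate g1 x j + (1 - t) * rate g2 x j.
      by apply/funext => j; apply: rate_comb.
    exact: simplex_comb.
- by apply/funext => j; rewrite /comb e01 e02; ring.
- by apply/funext => j; rewrite /comb eb1 eb2; ring.
Qed.
End S4.
Section S5.
Variable R : realType.
Variable I : nat.
Local Open Scope ereal_scope.

Lemma lnineq (x w : R) : (0 < x)%R -> (0 < w)%R -> (x - w <= x * ln (x / w))%R.
Proof.
move=> x0 w0.
have h : (ln (w / x) <= w / x - 1)%R.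
  have h1 : (-1 < w / x - 1)%R by have := divr_gt0 w0 x0; lra.
  by have := le_ln1Dx h1; rewrite addrCA subrr addr0.
have -> : (x / w = (w / x)^-1)%R by rewrite invf_div.
rewrite lnV ?posrE ?divr_gt0 //.
have -> : (x - w = x * (1 - w / x))%R by field; rewrite gt_eqF.
by rewrite ler_pM2l // lerNr opprB.
Qed.

Lemma xlogxy_ge (th g : R) : (0 <= g)%R -> (th - g)%:E <= xlogxy th g.
Proof.
move=> g0; rewrite /xlogxy.
have [->|th0] := eqVneq th 0%R; first by rewrite lee_fin sub0r oppr_le0.
have [->|gn0] := eqVneq g 0%R; first exact: leey.
have gp : (0 < g)%R by rewrite lt_def gn0.
rewrite lee_fin.
have [thn|thp] := ltP th 0%R.
  rewrite ln0 ?mulr0; last by rewrite pmulr_lle0 ?invr_gt0 // ltW.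
  by rewrite subr_le0 ltW // (lt_trans thn gp).
have thp' : (0 < th)%R by rewrite lt_def th0.
exact: lnineq.
Qed.

Lemma xlogxy_nNy (a b : R) : xlogxy a b != -oo.
Proof. by rewrite /xlogxy; case: ifP => //; case: ifP. Qed.

Lemma adde_def_nNy (x y : \bar R) : x != -oo -> y != -oo -> x +? y.
Proof. by case: x => [x| |] //; case: y. Qed.

Lemma xlogxy_hom (p a b : R) : (0 < p)%R -> xlogxy (p * a) (p * b) = p%:E * xlogxy a b.
Proof.
move=> p0; rewrite /xlogxy mulf_eq0 (gt_eqF p0) /=.
have [_|a0] := eqVneq a 0%R; first by rewrite mule0.
rewrite mulf_eq0 (gt_eqF p0) /=.
have [_|b0] := eqVneq b 0%R; first by rewrite gt0_muley ?lte_fin.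
rewrite -EFinM; congr EFin.
have -> : (p * a / (p * b) = a / b)%R by field; rewrite (gt_eqF p0) b0.
by rewrite mulrA.
Qed.

Lemma logsum (A B C D : R) : (0 < A)%R -> (0 < B)%R -> (0 < C)%R -> (0 < D)%R ->
  ((A + C) * ln ((A + C) / (B + D)) <= A * ln (A / B) + C * ln (C / D))%R.
Proof.
move=> A0 B0 C0 D0.
set s := ((A + C) / (B + D))%R.
have s0 : (0 < s)%R by rewrite divr_gt0 // addr_gt0.
have key (x y : R) : (0 < x)%R -> (0 < y)%R -> (x * ln s + x - y * s <= x * ln (x / y))%R.
  move=> x0 y0; have := lnineq x0 (mulr_gt0 y0 s0).
  have -> : (x / (y * s) = (x / y) / s)%R by field; rewrite (gt_eqF y0) (gt_eqF s0).
  have e : (ln (x / y / s) = ln (x / y) - ln s)%R.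
    by apply: ln_div; rewrite posrE // divr_gt0.
  rewrite e => h; nra.
have h1 := key A B A0 B0; have h2 := key C D C0 D0.
have hs : ((B + D) * s = A + C)%R by rewrite /s; field; rewrite gt_eqF // addr_gt0.
nra.
Qed.

Lemma xlogxy_subadd_0 (B C D : R) : (0 <= B)%R -> (0 <= C)%R -> (0 <= D)%R ->
  xlogxy C (B + D) <= xlogxy C D.
Proof.
move=> B0 C0 D0; rewrite /xlogxy.
have [//|Cn0] := eqVneq C 0%R.
have [_|Dn0] := eqVneq D 0%R; first by case: ifP => //; rewrite leey.
have Dp : (0 < D)%R by rewrite lt_def Dn0.
have Cp : (0 < C)%R by rewrite lt_def Cn0.
have BDp : (0 < B + D)%R by lra.
rewrite (gt_eqF BDp) lee_fin ler_pM2l // ler_ln ?posrE ?divr_gt0 //.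
rewrite ler_pM2l // lef_pV2 ?posrE //. lra.
Qed.

Lemma xlogxy_subadd (A B C D : R) : (0 <= A)%R -> (0 <= B)%R -> (0 <= C)%R -> (0 <= D)%R ->
  xlogxy (A + C) (B + D) <= xlogxy A B + xlogxy C D.
Proof.
move=> A0 B0 C0 D0.
have [->|An0] := eqVneq A 0%R.
  by rewrite add0r {2}/xlogxy eqxx add0e xlogxy_subadd_0.
have [->|Cn0] := eqVneq C 0%R.
  by rewrite addr0 {3}/xlogxy eqxx adde0 addrC xlogxy_subadd_0.
have Ap : (0 < A)%R by rewrite lt_def An0.
have Cp : (0 < C)%R by rewrite lt_def Cn0.
have [->|Bn0] := eqVneq B 0%R.
  by rewrite {2}/xlogxy (negbTE An0) eqxx addye ?xlogxy_nNy // leey.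
have [->|Dn0] := eqVneq D 0%R.
  by rewrite {3}/xlogxy (negbTE Cn0) eqxx addey ?xlogxy_nNy // leey.
have Bp : (0 < B)%R by rewrite lt_def Bn0.
have Dp : (0 < D)%R by rewrite lt_def Dn0.
rewrite /xlogxy !gt_eqF ?addr_gt0 // -EFinD lee_fin.
exact: logsum.
Qed.

Lemma xlogxy_convex (t a b c d : R) : (0 < t < 1)%R ->
  (0 <= a)%R -> (0 <= b)%R -> (0 <= c)%R -> (0 <= d)%R ->
  xlogxy (t * a + (1 - t) * c) (t * b + (1 - t) * d)
    <= t%:E * xlogxy a b + (1 - t)%:E * xlogxy c d.
Proof.
move=> /andP[t0 t1] a0 b0 c0 d0.
have t1' : (0 < 1 - t)%R by rewrite subr_gt0.
rewrite -!xlogxy_hom //; apply: xlogxy_subadd; exact: mulr_ge0 (ltW _) _.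
Qed.

End S5.
Section S6.
Variable R : realType.
Variable I : nat.
Local Open Scope ereal_scope.

Lemma rate_sum1 (gam : R -> 'I_I.+2 -> R) x : (\sum_(j < I.+2) rate gam x j = 1)%R.
Proof.
rewrite big_ord_recr /= {2}/rate /= ltnn.
under eq_bigr => i _ do rewrite /rate /= -ltnS ltn_ord.
by rewrite addrC subrK.
Qed.

Lemma relent_ge0 (th g : 'I_I.+2 -> R) : simplex g -> (\sum_j th j = 1)%R ->
  0 <= relent th g.
Proof.
move=> [g0 g1] th1; rewrite /relent.
apply: (@le_trans _ _ (\sum_(j < I.+2) ((th j - g j)%R)%:E)).
  by rewrite sumEFin sumrB th1 g1 subrr.
by apply: lee_sum => j _; apply: xlogxy_ge.
Qed.

Lemma relent_convex (t : R) (th1 th2 g1 g2 : 'I_I.+2 -> R) : (0 < t < 1)%R ->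
  (forall j, 0 <= th1 j)%R -> (forall j, 0 <= th2 j)%R ->
  (forall j, 0 <= g1 j)%R -> (forall j, 0 <= g2 j)%R ->
  relent (fun j => t * th1 j + (1 - t) * th2 j)%R (fun j => t * g1 j + (1 - t) * g2 j)%R
  <= t%:E * relent th1 g1 + (1 - t)%:E * relent th2 g2.
Proof.
move=> ht a0 b0 c0 d0; rewrite /relent.
rewrite !fin_num_sume_distrr // -?big_split /=; last first.
  by move=> i j _ _; apply: adde_def_nNy; apply: xlogxy_nNy.
  by move=> i j _ _; apply: adde_def_nNy; apply: xlogxy_nNy.
apply: lee_sum => j _; exact: xlogxy_convex.
Qed.
End S6.
Section S7.
Local Open Scope ereal_scope.
Context d (T : measurableType d) (R : realType).
Variable mu : {measure set T -> \bar R}.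
Import HBNNSimple.

Lemma int_null (D N : set T) (f : T -> \bar R) : measurable N -> mu N = 0 ->
  (forall x, D x -> 0 <= f x) ->
  \int[mu]_(x in D) f x = \int[mu]_(x in D `\` N) f x.
Proof.
move=> mN N0 f0.
have f0' : forall x, (D `\` N) x -> 0 <= f x by move=> x [] /f0.
rewrite !ge0_integralE //.
apply: le_anti; apply/andP; split; last first.
  apply: ereal_sup_le => _ [h hle <-]; exists h => // x.
  apply: (le_trans (hle x)); rewrite !patchE.
  case: ifPn => [/set_mem [Dx _]|_]; first by rewrite mem_set.
  by case: ifPn => // /set_mem Dx; exact: f0.
apply: ge_ereal_sup => _ [h hle <-].
have mNC : measurable (~` N) by exact: measurableC.
pose h' := proj_nnsfun h mNC.
have h'E x : h' x = (h x * (\1_(~` N) x))%R by [].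
have eqi : sintegral mu h = sintegral mu h'.
  have e1 : sintegral mu h = sintegral mu (h \_ setT) by rewrite patch_setT.
  have e2 : sintegral mu h' = sintegral mu (h' \_ setT) by rewrite patch_setT.
  rewrite e1 e2.
  rewrite -!integral_nnsfun //.
  apply: ae_eq_integral => //.
  - by apply/measurable_realfun.measurable_EFinP.
  - by apply/measurable_realfun.measurable_EFinP.
  - exists N; split => // x /= hx; apply: contrapT => xN; apply: hx => _.
    change ((h x)%:E = (h x * \1_(~` N) x)%:E)%R.
    by rewrite indicE mem_set // mulr1.
rewrite eqi; apply: ereal_sup_ubound; exists h' => // x.
rewrite h'E indicE; have [xN|xN] := boolP (x \in ~` N).
  rewrite [X in (h x * X)%R]/= mulr1; apply: (le_trans (hle x)); rewrite !patchE.
  case: ifPn => [Dx|_]; last by case: ifPn => // /set_mem; exact: f0'.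
  by rewrite mem_set //; split; [exact: set_mem | move: xN; rewrite inE].
rewrite [X in (h x * X)%R]/= mulr0 patchE; case: ifPn => // /set_mem; exact: f0'.
Qed.
End S7.

Section S8.
Variable R : realType.

Definition clamp (b y : R) := if y <= 0 then 0 else if y <= b then y else b.

Lemma clamp_cases (b y : R) : 0 <= b ->
  (y <= 0 /\ clamp b y = 0) \/ (0 <= y <= b /\ clamp b y = y) \/ (b <= y /\ clamp b y = b).
Proof.
move=> b0; rewrite /clamp.
have [y0|y0] := leP y 0; first by left.
have [yb|yb] := leP y b; first by right; left; rewrite /= ltW.
by right; right; rewrite ltW.
Qed.

Lemma clamp_id (b y : R) : 0 <= y <= b -> clamp b y = y.
Proof.
move=> /andP[y0 yb].
have b0 : 0 <= b by lra.
by case: (clamp_cases y b0) => [[h ->]|[[h ->]|[h ->]]] //; lra.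
Qed.

Lemma clamp_lip (b p q : R) : 0 <= b -> p <= q ->
  0 <= clamp b p /\ clamp b p <= clamp b q /\ clamp b q <= b /\
  clamp b q - clamp b p <= q - p.
Proof.
move=> b0 pq.
case: (clamp_cases p b0) => [[h1 ->]|[[h1 ->]|[h1 ->]]];
case: (clamp_cases q b0) => [[h2 ->]|[[h2 ->]|[h2 ->]]]; repeat split; lra.
Qed.

Lemma ac_cont (b : R) (f : R -> R) : 0 <= b -> abs_cont_on 0 b f ->
  continuous (fun y => f (clamp b y)).
Proof.
move=> b0 ac y; apply/cvgrPdist_lt => e e0.
have [d d0 H] := ac e e0.
have key p q : p <= q -> q - p < d -> `|f (clamp b q) - f (clamp b p)| < e.
  move=> pq hd; have [c1 [c2 [c3 c4]]] := clamp_lip b0 pq.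
  have := H 1%N (fun _ => clamp b p) (fun _ => clamp b q).
  rewrite !big_ord1; apply.
  - by move=> _; repeat split.
  - by move=> k l; rewrite !ord1 eqxx.
  - lra.
apply/nbhs_ballP; exists d => //= z; rewrite /ball /= => hz.
have [yz|zy] := leP y z.
  rewrite distrC; apply: key => //.
  by move: hz; rewrite distrC ger0_norm ?subr_ge0 //; lra.
apply: key; first exact: ltW.
by move: hz; rewrite gtr0_norm ?subr_gt0 //; lra.
Qed.
End S8.
Section S9.
Variable R : realType.

Lemma deriv_seq (b : R) (f : R -> R) x : 0 < x < b -> derivable f x 1 ->
  (fun n => (f (clamp b (x + harmonic n)) - f (clamp b x)) / harmonic n) @ \oo
    --> derive1 f x.
Proof.
move=> /andP[x0 xb] df.
pose G := fun h : R => h^-1 *: (f (h + x) - f x).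
have L : G @ 0^' --> derive1 f x.
  have eG : (fun h : R => h^-1 *: ((f \o shift x) (h *: (1:R)) - f x)) = G.
    apply/funext => h; rewrite /G /=; congr (_ *: (f _ - _)).
    by change (h * 1 + x = h + x); rewrite mulr1.
  have hc : cvg (G @ 0^') by move: df; rewrite /derivable eG.
  exact: hc.
have L' := cvg_dnbhs_at_right L.
have L'' := (cvg_at_rightP G 0 (derive1 f x)).1 L' harmonic.
have hpos : forall n, (0 : R) < harmonic n by move=> n; rewrite /harmonic /= invr_gt0.
have Lh := L'' (conj hpos cvg_harmonic).
have bx : 0 < b - x by lra.
have E : \forall n \near \oo, G (harmonic n) =
    (f (clamp b (x + harmonic n)) - f (clamp b x)) / harmonic n.
  have H0 := (cvgrPdist_lt _ _).1 (@cvg_harmonic R) _ bx.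
  near=> n.
  have hn : `|0 - harmonic n| < b - x.
    near: n; apply: H0.
  move: hn; rewrite sub0r normrN => hn.
  have h0 := hpos n.
  have hn' : harmonic n < b - x by move: hn; rewrite ger0_norm // ltW.
  rewrite clamp_id; last by apply/andP; split; lra.
  rewrite clamp_id; last by apply/andP; split; lra.
  by rewrite /G /= [x + harmonic n]addrC mulrC.
  Unshelve. all: end_near.
exact: cvg_trans (near_eq_cvg E) Lh.
Qed.
End S9.
Section S10.
Variable R : realType.

Lemma meas_contf (b : R) (f : R -> R) (D : set R) : 0 <= b -> abs_cont_on 0 b f ->
  measurable D -> D `<=` `[0, b] -> measurable_fun D f.
Proof.
move=> b0 ac mD sD.
apply: (eq_measurable_fun (fun y => f (clamp b y))).
  move=> x; rewrite inE => /sD; rewrite /= in_itv /= => hx.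
  by rewrite clamp_id.
apply: (measurable_funS measurableT) => //.
exact: continuous_measurable_fun (ac_cont b0 ac).
Qed.

Lemma meas_deriv (b : R) (f : R -> R) (D : set R) : 0 <= b -> abs_cont_on 0 b f ->
  measurable D -> D `<=` `]0, b[ -> (forall x, D x -> derivable f x 1) ->
  measurable_fun D (derive1 f).
Proof.
move=> b0 ac mD sD df.
have mfh : measurable_fun setT (fun y => f (clamp b y)).
  exact: continuous_measurable_fun (ac_cont b0 ac).
pose hh := fun (n : nat) (x : R) => (f (clamp b (x + harmonic n)) - f (clamp b x)) / harmonic n.
pose df1 := fun x : R => (derive1 f x : R).
have : measurable_fun D df1; last by [].
apply: (@measurable_fun_cvg _ _ _ _ hh).
  move=> n; apply: (measurable_funS measurableT) => //.
  apply: measurable_funM => //.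
  apply: measurable_funB => //.
  apply: (measurableT_comp mfh).
  by apply: measurable_funD.
move=> x Dx; have := sD x Dx; rewrite /= in_itv /= => hx.
exact: (deriv_seq hx (df x Dx)).
Qed.
End S10.
Section S11.
Variable R : realType.

Lemma meas_xlogxy (D : set R) (a c : R -> R) : measurable D ->
  measurable_fun D a -> measurable_fun D c ->
  (forall x, D x -> 0 <= a x) -> (forall x, D x -> 0 <= c x) ->
  measurable_fun D (fun x => xlogxy (a x) (c x)).
Proof.
move=> mD ma mc a0 c0; rewrite /xlogxy.
have mea : measurable_fun D (fun x => a x == 0).
  exact: measurable_fun_eqr ma (measurable_cst _).
apply: measurable_fun_if => //.
set D1 := D `&` _.
have mD1 : measurable D1 by apply: mea.
have sD1 : D1 `<=` D by apply: subIsetl.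
apply: measurable_fun_if => //.
  exact: measurable_fun_eqr (measurable_funS mD sD1 mc) (measurable_cst _).
set D2 := D1 `&` _.
have sD2 : D2 `<=` D by move=> x [] /sD1.
apply: (eq_measurable_fun (fun x => (a x * (ln (a x) - ln (c x)))%:E)).
  move=> x; rewrite inE => -[[Dx /= an0] /= cn0].
  have ap : 0 < a x by rewrite lt_def an0 /= a0.
  have cp : 0 < c x by rewrite lt_def cn0 /= c0.
  by rewrite ln_div // posrE.
apply/measurable_EFinP; apply: measurable_funM.
  exact: measurable_funS mD sD2 ma.
apply: measurable_funB.
  by apply: measurableT_comp; [exact: measurable_ln|exact: measurable_funS mD sD2 ma].
by apply: measurableT_comp; [exact: measurable_ln|exact: measurable_funS mD sD2 mc].
Qed.
End S11.
Section S12.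
Variable R : realType.
Variable I : nat.

Lemma meas_relent (b : R) (gam : R -> 'I_I.+2 -> R) (D : set R) : 0 <= b ->
  (forall j, abs_cont_on 0 b (fun y => gam y j)) -> measurable D -> D `<=` `]0, b[ ->
  (forall x, D x -> forall j, derivable (fun y => gam y j) x 1) ->
  (forall x, D x -> simplex (gam x)) -> (forall x, D x -> simplex (rate gam x)) ->
  measurable_fun D (fun x => relent (rate gam x) (gam x)).
Proof.
move=> b0 ac mD sD dg sg sr.
have sD' : D `<=` `[0, b].
  move=> x /sD; rewrite /= !in_itv /= => /andP[h1 h2].
  by rewrite !ltW.
have mg j : measurable_fun D (fun x => gam x j) by exact: meas_contf (ac j) mD sD'.
have md j : measurable_fun D (fun x => derive1 (fun y => gam y j) x).
  by apply: meas_deriv (ac j) mD sD _ => // x Dx; exact: dg.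
have mth n : measurable_fun D (fun x => theta_nat gam x n).
  rewrite /theta_nat.
  apply: (eq_measurable_fun (fun x => - \sum_(k <- index_enum 'I_I.+2)
     (if (k <= n)%N then derive1 (fun y => gam y k) x else 0))).
    by move=> x _; rewrite [in RHS]big_mkcond.
  apply: measurable_funN; apply: measurable_sum => k.
  by case: leqP => _; [exact: md | exact: measurable_cst].
have mr j : measurable_fun D (fun x => rate gam x j).
  rewrite /rate; case: leqP => _; first exact: mth.
  apply: measurable_funB; first exact: measurable_cst.
  by apply: measurable_sum => k.
rewrite /relent; apply: emeasurable_sum => j.
apply: meas_xlogxy => //.
  by move=> x Dx; case: (sr x Dx).
by move=> x Dx; case: (sg x Dx).
Qed.
End S12.
Section S13.
Variable R : realType.
Variable I : nat.
Local Open Scope ereal_scope.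

Lemma ae_get (b : R) (P : R -> Prop) :
  {ae (@lebesgue_measure R), forall x, x \in `[0%R, b] -> P x} ->
  exists N : set R, [/\ measurable N, lebesgue_measure N = 0 &
     forall x, x \in `[0%R, b] -> ~ N x -> P x].
Proof.
move=> [N [mN N0 sN]]; exists N; split => // x xb xN.
apply: contrapT => nP; apply: xN; apply: sN => /= H; apply: nP; exact: H xb.
Qed.
End S13.
Unset Implicit Arguments.
Theorem lemmaA15 (R : realType) (I : nat) (alpha omega : 'I_I.+2 -> R) (beta : R) :
  0 < beta ->
  simplex alpha -> simplex omega ->
  feasible alpha omega beta ->
  (forall (g1 g2 : R -> 'I_I.+2 -> R) (t : R),
      occ_set alpha omega beta g1 -> occ_set alpha omega beta g2 ->
      0 <= t <= 1 -> occ_set alpha omega beta (comb t g1 g2)) /\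
  (forall (g1 g2 : R -> 'I_I.+2 -> R) (t : R),
      occ_set alpha omega beta g1 -> occ_set alpha omega beta g2 ->
      0 <= t <= 1 ->
      (Jcost beta (comb t g1 g2) <= t%:E * Jcost beta g1 + (1 - t)%:E * Jcost beta g2)%E).
Proof.
move=> b0 _ _ _; split.
  by move=> g1 g2 t h1 h2 ht; apply: occ_comb.
move=> g1 g2 t h1 h2 ht.
have [t0e|tn0] := eqVneq t 0.
  have -> : comb t g1 g2 = g2.
    by apply/funext => x; apply/funext => j; rewrite /comb t0e; ring.
  by rewrite t0e mul0e add0e subr0 mul1e.
have [t1e|tn1] := eqVneq t 1.
  have -> : comb t g1 g2 = g1.
    by apply/funext => x; apply/funext => j; rewrite /comb t1e; ring.
  by rewrite t1e mul1e subrr mul0e adde0.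
have /andP[t0 t1] := ht.
have ht' : 0 < t < 1 by rewrite !lt_def tn0 t0 eq_sym tn1 t1.
have hc := occ_comb h1 h2 ht.
case: h1 => [[ac1 [s1 ae1]] _]; case: h2 => [[ac2 [s2 ae2]] _].
case: hc => [[acc [sc aec]] _].
have [N1 [mN1 N10 P1]] := ae_get ae1.
have [N2 [mN2 N20 P2]] := ae_get ae2.
pose A := N1 `|` N2 `|` [set 0] `|` [set beta].
have m12 : measurable (N1 `|` N2) by exact: measurableU.
have m120 : measurable (N1 `|` N2 `|` [set 0%R]).
  by apply: measurableU => //; exact: measurable_set1.
have mA : measurable A by apply: measurableU => //; exact: measurable_set1.
have A0 : (@lebesgue_measure R) A = 0%E.
  rewrite /A (@measureU0 _ _ _ (@lebesgue_measure R) _ _ m120 (measurable_set1 beta)); last first.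
    exact: lebesgue_measure_set1.
  rewrite (@measureU0 _ _ _ (@lebesgue_measure R) _ _ m12 (measurable_set1 0%R)); last first.
    exact: lebesgue_measure_set1.
  by rewrite (@measureU0 _ _ _ (@lebesgue_measure R) _ _ mN1 mN2 N20).
pose D' := `[0%R, beta]%classic `\` A.
have mD' : measurable D' by apply: measurableD => //; exact: measurable_itv.
have b0' : (0 <= beta)%R by exact: ltW.
have good x : D' x -> [/\ x \in `]0%R, beta[, x \in `[0%R, beta],
   ((forall j, derivable (fun y => g1 y j) x 1) /\
     derive1 (fun y => g1 y ord_max) x = rate g1 x (inord I) /\
     simplex (rate g1 x)) &
   ((forall j, derivable (fun y => g2 y j) x 1) /\
     derive1 (fun y => g2 y ord_max) x = rate g2 x (inord I) /\
     simplex (rate g2 x))].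
  move=> [xb xA]; have xb' : x \in `[0%R, beta] by exact: xb.
  have nN1 : ~ N1 x by move=> h; apply: xA; left; left; left.
  have nN2 : ~ N2 x by move=> h; apply: xA; left; left; right.
  have n0 : x != 0%R by apply/eqP => h; apply: xA; left; right.
  have nb : x != beta by apply/eqP => h; apply: xA; right.
  split => //; last 2 first.
  - exact: P1.
  - exact: P2.
  move: xb'; rewrite !in_itv /= => /andP[h1 h2].
  by rewrite !lt_def n0 h1 h2 eq_sym nb.
have sD'o : D' `<=` `]0%R, beta[ by move=> x /good [].
have sD'c : D' `<=` `[0%R, beta] by move=> x [].
have F0 (g : R -> 'I_I.+2 -> R) : (forall x, x \in `[0%R, beta] -> simplex (g x)) ->
    forall x, (`[0%R, beta]%classic : set R) x -> (0 <= relent (rate g x) (g x))%E.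
  by move=> sg x xb; apply: relent_ge0; [apply: sg; exact: xb | exact: rate_sum1].
have mF (g : R -> 'I_I.+2 -> R) : (forall j, abs_cont_on 0 beta (fun y => g y j)) ->
    (forall x, x \in `[0%R, beta] -> simplex (g x)) ->
    (forall x, D' x -> (forall j, derivable (fun y => g y j) x 1) /\ simplex (rate g x)) ->
    measurable_fun D' (fun x => relent (rate g x) (g x)).
  move=> acg sg hg; apply: (meas_relent b0' acg mD' sD'o).
  - by move=> x Dx; case: (hg x Dx).
  - by move=> x /sD'c xb; apply: sg.
  - by move=> x Dx; case: (hg x Dx).
have dc x : D' x -> (forall j, derivable (fun y => comb t g1 g2 y j) x 1) /\
    simplex (rate (comb t g1 g2) x).
  move=> /good [_ _ [d1 [_ r1]] [d2 [_ r2]]]; split.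
    by move=> j; exact: (derive_comb t (d1 j) (d2 j)).1.
  have -> : rate (comb t g1 g2) x = fun j => (t * rate g1 x j + (1 - t) * rate g2 x j)%R.
    by apply/funext => j; apply: rate_comb.
  exact: simplex_comb.
have mFc := mF _ acc sc dc.
have mF1 : measurable_fun D' (fun x => relent (rate g1 x) (g1 x)).
  by apply: mF => // x /good [_ _ [? [_ ?]] _].
have mF2 : measurable_fun D' (fun x => relent (rate g2 x) (g2 x)).
  by apply: mF => // x /good [_ _ _ [? [_ ?]]].
rewrite /Jcost.
rewrite (@int_null _ _ _ (@lebesgue_measure R) _ _ _ mA A0 (F0 _ sc)) (@int_null _ _ _ (@lebesgue_measure R) _ _ _ mA A0 (F0 _ s1)).
rewrite (@int_null _ _ _ (@lebesgue_measure R) _ _ _ mA A0 (F0 _ s2)).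
have F0' (g : R -> 'I_I.+2 -> R) : (forall x, x \in `[0%R, beta] -> simplex (g x)) ->
    forall x, D' x -> (0 <= relent (rate g x) (g x))%E.
  by move=> sg x /sD'c; apply: F0.
have ge1 : (0 <= 1 - t)%R by rewrite subr_ge0.
rewrite -ge0_integralZl_EFin //; last by move=> x /(F0' _ s1).
rewrite -[X in (_ <= _ + X)%E]ge0_integralZl_EFin //; last by move=> x /(F0' _ s2).
rewrite -ge0_integralD //; first last.
- by apply: measurable_funeM.
- by move=> x Dx; apply: mule_ge0; [rewrite lee_fin | exact: F0' s2 x Dx].
- by apply: measurable_funeM.
- by move=> x Dx; apply: mule_ge0; [rewrite lee_fin | exact: F0' s1 x Dx].
apply: ge0_le_integral => //.
- by move=> x Dx; exact: F0' sc x Dx.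
- by apply: emeasurable_funD; apply: measurable_funeM.
move=> x Dx; have [_ xb [d1 [_ r1]] [d2 [_ r2]]] := good x Dx.
have -> : rate (comb t g1 g2) x = fun j => (t * rate g1 x j + (1 - t) * rate g2 x j)%R.
  by apply/funext => j; apply: rate_comb.
rewrite /comb; apply: relent_convex => //.
- by case: r1.
- by case: r2.
- by case: (s1 x xb).
- by case: (s2 x xb).
Qed.
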